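(* Every $\omega_1$-existentially closed group is strongly bounded.
   Context: A group $G$ is $\omega_1$-existentially closed if every countable set of equations and inequations with coefficients in $G$ which has a solution in some group containing $G$ already has a solution in $G$. A group is called strongly bounded if for every action of it by isometries on a metric space, every orbit is bounded. *)

(* Defs.v *)
From Stdlib Require Import Reals Rtopology.
Open Scope R_scope.

Record Group := {
  gcar :> Type;
  gmul : gcar -> gcar -> gcar;
  ginv : gcar -> gcar;
  gone : gcar;
  gmul_assoc : forall x y z, gmul x (gmul y z) = gmul (gmul x y) z;
  gmul_1l : forall x, gmul gone x = x;
  gmul_1r : forall x, gmul x gone = x;
  gmul_Vl : forall x, gmul (ginv x) x = gone;
  gmul_Vr : forall x, gmul x (ginv x) = gone
}.

Arguments gmul {g}.
Arguments ginv {g}.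
Arguments gone {g}.

Definition is_hom (G H : Group) (f : G -> H) : Prop :=
  forall x y : G, f (gmul x y) = gmul (f x) (f y).

(** Words / terms in countably many unknowns x_0, x_1, ... with
    coefficients (constants) in G, i.e. elements of G * F(x_0, x_1, ...). *)
Inductive term (G : Type) : Type :=
  | tconst : G -> term G
  | tvar : nat -> term G
  | tmul : term G -> term G -> term G
  | tinv : term G -> term G.

Arguments tconst {G}.
Arguments tvar {G}.
Arguments tmul {G}.
Arguments tinv {G}.

Fixpoint eval_term {G : Type} {H : Group} (f : G -> H) (s : nat -> H)
    (t : term G) : H :=
  match t with
  | tconst g => f g
  | tvar n => s n
  | tmul t1 t2 => gmul (eval_term f s t1) (eval_term f s t2)
  | tinv t1 => ginv (eval_term f s t1)
  end.

(** A countable system of equations w = 1 (for w in [eqs n]) and inequations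
    w <> 1 (for w in [ineqs n]) with coefficients in G.  Using [option]
    allows empty or finite families as well. *)
Record system (G : Type) := {
  eqs : nat -> option (term G);
  ineqs : nat -> option (term G)
}.

Arguments eqs {G}.
Arguments ineqs {G}.

Definition solves {G : Type} {H : Group} (f : G -> H) (S : system G)
    (s : nat -> H) : Prop :=
  (forall n w, eqs S n = Some w -> eval_term f s w = gone) /\
  (forall n w, ineqs S n = Some w -> eval_term f s w <> gone).

Definition solvable_over (G : Group) (S : system G) : Prop :=
  exists (H : Group) (f : G -> H),
    is_hom G H f /\ (forall x y, f x = f y -> x = y) /\
    exists s : nat -> H, solves f S s.

Definition omega1_ec (G : Group) : Prop :=
  forall S : system G, solvable_over G S ->
    exists s : nat -> G, solves (H := G) (fun g => g) S s.

Definition isometric_action (G : Group) (X : Metric_Space)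
    (a : G -> Base X -> Base X) : Prop :=
  (forall x, a gone x = x) /\
  (forall g h x, a (gmul g h) x = a g (a h x)) /\
  (forall g x y, dist X (a g x) (a g y) = dist X x y).

Definition strongly_bounded (G : Group) : Prop :=
  forall (X : Metric_Space) (a : G -> Base X -> Base X),
    isometric_action G X a ->
    forall x : Base X, exists M : R,
      forall g h : G, dist X (a g x) (a h x) <= M.

(* Main.v *)
Require Import Defs.
From Stdlib Require Import Reals Rtopology.
From Stdlib Require Import ZArith Lia Lra Psatz Classical ClassicalEpsilon
  FunctionalExtensionality ProofIrrelevance.

Record perm (X : Type) : Type := mkPerm {
  pf : X -> X; pg : X -> X;
  pfg : forall x, pf (pg x) = x; pgf : forall x, pg (pf x) = x }.
Arguments mkPerm {X}.
Arguments pf {X}.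
Arguments pg {X}.
Arguments pfg {X}.
Arguments pgf {X}.

Lemma perm_ext {X} (p q : perm X) : (forall x, pf p x = pf q x) -> p = q.
Proof.
  destruct p as [f g fg gf], q as [f' g' fg' gf']; simpl; intros E.
  assert (f = f') by (apply functional_extensionality; exact E). subst f'.
  assert (g = g').
  { apply functional_extensionality; intro x.
    rewrite <- (fg' x) at 1. rewrite gf. reflexivity. }
  subst g'. f_equal; apply proof_irrelevance.
Qed.

Definition pmul {X} (p q : perm X) : perm X.
Proof.
  refine (mkPerm (fun x => pf p (pf q x)) (fun x => pg q (pg p x)) _ _);
  intro x; [rewrite pfg, pfg | rewrite pgf, pgf]; reflexivity.
Defined.
Definition pinv {X} (p : perm X) : perm X := mkPerm (pg p) (pf p) (pgf p) (pfg p).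
Definition pone {X} : perm X := mkPerm (fun x => x) (fun x => x) (fun x => eq_refl) (fun x => eq_refl).

Definition PermGroup (X : Type) : Group.
Proof.
  refine (Build_Group (perm X) pmul pinv pone _ _ _ _ _);
  intros; apply perm_ext; intros; simpl; try reflexivity.
  - apply pgf.
  - apply pfg.
Defined.

Section Constr.
Variable G : Group.
Variable gs : nat -> G.

Definition XX := (gcar G * Z * Z)%type.

Definition mult (c : Z -> Z -> G) : perm XX.
Proof.
  refine (mkPerm (fun x => let '(h, j, k) := x in (gmul (c j k) h, j, k))
                 (fun x => let '(h, j, k) := x in (gmul (ginv (c j k)) h, j, k)) _ _);
  intros [[h j] k]; rewrite gmul_assoc;
  [rewrite gmul_Vr | rewrite gmul_Vl]; rewrite gmul_1l; reflexivity.
Defined.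

Definition sigma (g : G) : perm XX :=
  mult (fun j k => if (Z.eqb j 0 && Z.eqb k 0)%bool then g else gone).

Definition cA (j k : Z) : G :=
  if (Z.leb 0 j && Z.leb k 0)%bool then gs (Z.to_nat (- k)) else gone.
Definition pa : perm XX := mult cA.

Definition pt : perm XX.
Proof.
  refine (mkPerm (fun x => let '(h, j, k) := x in (h, j, k + 1)%Z)
                 (fun x => let '(h, j, k) := x in (h, j, k - 1)%Z) _ _);
  intros [[h j] k]; f_equal; lia.
Defined.

Definition pb : perm XX.
Proof.
  refine (mkPerm (fun x => let '(h, j, k) := x in if Z.eqb k 0 then (h, j + 1, k)%Z else (h, j, k))
                 (fun x => let '(h, j, k) := x in if Z.eqb k 0 then (h, j - 1, k)%Z else (h, j, k)) _ _);
  intros [[h j] k]; simpl; destruct (Z.eqb k 0) eqn:E; simpl; rewrite ?E; try reflexivity; repeat f_equal; lia.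
Defined.

Definition HG : Group := PermGroup XX.

Lemma sigma_hom : is_hom G HG sigma.
Proof.
  intros x y; apply perm_ext; intros [[h j] k]; simpl.
  destruct (Z.eqb j 0 && Z.eqb k 0)%bool; rewrite ?gmul_1l, ?gmul_assoc; reflexivity.
Qed.

Lemma sigma_inj : forall x y, sigma x = sigma y -> x = y.
Proof.
  intros x y E. assert (H := f_equal (fun p : perm XX => pf p (gone, 0%Z, 0%Z)) E).
  simpl in H. rewrite !gmul_1r in H. congruence.
Qed.

End Constr.

Fixpoint tpow {G : Type} (g1 : G) (n : nat) : term G :=
  match n with
  | O => tconst g1
  | S m => tmul (tvar 0) (tpow g1 m)
  end.

Definition uterm {G : Type} (g1 : G) (n : nat) : term G :=
  tmul (tpow g1 n) (tmul (tvar 1) (tinv (tpow g1 n))).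
Definition cterm {G : Type} (g1 : G) (n : nat) : term G :=
  tmul (uterm g1 n) (tmul (tvar 2) (tmul (tinv (uterm g1 n)) (tinv (tvar 2)))).
Definition wterm {G : Type} (g1 g : G) (n : nat) : term G :=
  tmul (tinv (tconst g)) (cterm g1 n).

Definition sys (G : Group) (gs : nat -> G) : system G :=
  {| eqs := fun n => Some (wterm gone (gs n) n); ineqs := fun _ => None |}.

Lemma inv_one (G : Group) : ginv (@gone G) = gone.
Proof. pose proof (gmul_Vr G gone) as H. rewrite gmul_1l in H. exact H. Qed.

Section Key.
Variable G : Group.
Variable gs : nat -> G.

Definition sH (i : nat) : perm (XX G) :=
  match i with 0 => pt G | 1 => pa G gs | _ => pb G end.

Notation ev := (@eval_term G (HG G) (sigma G) sH).

Lemma pow_pf n h j k : pf (ev (tpow gone n)) (h, j, k) = (h, j, k + Z.of_nat n)%Z.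
Proof.
  induction n; simpl.
  - destruct (Z.eqb j 0 && Z.eqb k 0)%bool; rewrite gmul_1l; f_equal; lia.
  - simpl in IHn. rewrite IHn. f_equal. lia.
Qed.

Lemma pow_pg n h j k : pg (ev (tpow gone n)) (h, j, k) = (h, j, k - Z.of_nat n)%Z.
Proof.
  revert k; induction n; intro k; simpl.
  - destruct (Z.eqb j 0 && Z.eqb k 0)%bool; rewrite ?gmul_1l;
      rewrite inv_one;
      rewrite gmul_1l; f_equal; lia.
  - simpl in IHn. simpl. rewrite IHn. f_equal. lia.
Qed.

Lemma u_pf n h j k : pf (ev (uterm gone n)) (h, j, k) = (gmul (cA G gs j (k - Z.of_nat n)) h, j, k).
Proof.
  change (pf (ev (tpow gone n)) (pf (pa G gs) (pg (ev (tpow gone n)) (h, j, k))) = 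
     (gmul (cA G gs j (k - Z.of_nat n)) h, j, k)).
  rewrite pow_pg. simpl pf at 2. rewrite pow_pf. f_equal. f_equal. lia.
Qed.

Lemma u_pg n h j k : pg (ev (uterm gone n)) (h, j, k) = (gmul (ginv (cA G gs j (k - Z.of_nat n))) h, j, k).
Proof.
  change (pf (ev (tpow gone n)) (pg (pa G gs) (pg (ev (tpow gone n)) (h, j, k))) = 
     (gmul (ginv (cA G gs j (k - Z.of_nat n))) h, j, k)).
  rewrite pow_pg. simpl pg at 1. rewrite pow_pf. f_equal. f_equal. lia.
Qed.

Lemma comm_eq n : ev (cterm gone n) = sigma G (gs n).
Proof.
  apply perm_ext. intros [[h j] k].
  change (pf (ev (uterm gone n)) (pf (pb G) (pg (ev (uterm gone n)) (pg (pb G) (h, j, k))))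
    = pf (sigma G (gs n)) (h, j, k)).
  simpl pg at 2. destruct (Z.eqb k 0) eqn:Ek.
  - apply Z.eqb_eq in Ek. subst k.
    assert (Hc : forall j', cA G gs j' (0 - Z.of_nat n) = if Z.leb 0 j' then gs n else gone).
    { intro j'. unfold cA. replace (Z.leb (0 - Z.of_nat n) 0) with true by (symmetry; apply Z.leb_le; lia).
      replace (Z.to_nat (- (0 - Z.of_nat n))) with n by lia.
      destruct (Z.leb 0 j'); reflexivity. }
    rewrite u_pg, Hc. simpl pf at 2. rewrite ?Z.eqb_refl. rewrite u_pf, Hc.
    rewrite Z.sub_add. simpl pf.
    destruct (Z.leb_spec 0 (j - 1)); destruct (Z.leb_spec 0 j);
      destruct (Z.eqb_spec j 0); simpl; try lia;
      rewrite ?inv_one, ?gmul_assoc, ?gmul_Vr, ?gmul_1l, ?gmul_1r; try reflexivity.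
  - rewrite u_pg. simpl pf at 2. rewrite Ek. rewrite u_pf.
    simpl. rewrite Ek. destruct (Z.eqb j 0); simpl;
    rewrite gmul_assoc, gmul_Vr, !gmul_1l; reflexivity.
Qed.

End Key.

Lemma solv (G : Group) (gs : nat -> G) : solvable_over G (sys G gs).
Proof.
  exists (HG G), (sigma G). split; [apply sigma_hom|]. split; [apply sigma_inj|].
  exists (sH G gs). split.
  - intros n w Hw. simpl in Hw. injection Hw as <-.
    change (@gmul (HG G) (@ginv (HG G) (sigma G (gs n))) (eval_term (H := HG G) (sigma G) (sH G gs) (cterm gone n)) = gone).
    rewrite comm_eq. apply gmul_Vl.
  - intros n w Hw. discriminate.
Qed.

Section Bound.
Variable G : Group.
Variable X : Metric_Space.
Variable a : G -> Base X -> Base X.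
Hypothesis Ha : isometric_action G X a.
Variable x : Base X.

Definition N (g : G) : R := dist X (a g x) x.

Lemma N_pos g : 0 <= N g.
Proof. unfold N. pose proof (dist_pos X (a g x) x). lra. Qed.

Lemma N_one : N gone = 0.
Proof. unfold N. destruct Ha as [H1 _]. rewrite H1. apply dist_refl. reflexivity. Qed.

Lemma N_mul g h : N (gmul g h) <= N g + N h.
Proof.
  unfold N. destruct Ha as [_ [H2 H3]]. rewrite H2.
  pose proof (dist_tri X (a g (a h x)) x (a g x)). rewrite H3 in H. lra.
Qed.

Lemma N_inv g : N (ginv g) = N g.
Proof.
  unfold N. destruct Ha as [H1 [H2 H3]].
  rewrite <- (H3 g). rewrite <- H2, gmul_Vr, H1. apply dist_sym.
Qed.

Lemma N_pow (s : nat -> G) n : N (eval_term (H := G) (fun g => g) s (tpow gone n)) <= INR n * N (s 0%nat).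
Proof.
  induction n.
  - simpl. rewrite N_one. lra.
  - rewrite S_INR. cbn [eval_term tpow].
    eapply Rle_trans; [apply N_mul|]. lra.
Qed.

Lemma N_comm (s : nat -> G) n :
  N (eval_term (H := G) (fun g => g) s (cterm gone n)) <=
    4 * INR n * N (s 0%nat) + 2 * N (s 1%nat) + 2 * N (s 2%nat).
Proof.
  assert (Hu : N (eval_term (H := G) (fun g => g) s (uterm gone n)) <= 2 * INR n * N (s 0%nat) + N (s 1%nat)).
  { unfold uterm. simpl eval_term.
    eapply Rle_trans; [apply N_mul|].
    pose proof (N_mul (s 1%nat) (ginv (eval_term (H := G) (fun g => g) s (tpow gone n)))).
    rewrite N_inv in H. pose proof (N_pow s n). lra. }
  set (U := eval_term (H := G) (fun g => g) s (uterm gone n)) in *.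
  change (N (gmul U (gmul (s 2%nat) (gmul (ginv U) (ginv (s 2%nat))))) <=
    4 * INR n * N (s 0%nat) + 2 * N (s 1%nat) + 2 * N (s 2%nat)).
  eapply Rle_trans; [apply N_mul|].
  eapply Rle_trans; [apply Rplus_le_compat_l, N_mul|].
  eapply Rle_trans; [apply Rplus_le_compat_l, Rplus_le_compat_l, N_mul|].
  rewrite !N_inv. lra.
Qed.

End Bound.

Lemma cancel_l (G : Group) (g c : G) : gmul (ginv g) c = gone -> c = g.
Proof.
  intro H. rewrite <- (gmul_1l G c), <- (gmul_Vr G g), <- gmul_assoc, H, gmul_1r.
  reflexivity.
Qed.

Theorem mainTheorem2 (G : Group) : omega1_ec G -> strongly_bounded G.
Proof.
  intros Hec X a Ha x. apply NNPP; intro Hnb.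
  assert (Hun : forall M, exists g, N G X a x g > M).
  { intro M. apply NNPP; intro H'. apply Hnb. exists (2 * M). intros g h.
    assert (Hb : forall g, N G X a x g <= M).
    { intro g'. apply Rnot_lt_le. intro Hl. apply H'. exists g'. exact Hl. }
    pose proof (dist_tri X (a g x) (a h x) x). pose proof (dist_sym X x (a h x)).
    pose proof (Hb g). pose proof (Hb h). unfold N in *. lra. }
  set (gs := fun n : nat => proj1_sig (constructive_indefinite_description _ (Hun (INR n * INR n)))).
  assert (Hgs : forall n, N G X a x (gs n) > INR n * INR n).
  { intro n. unfold gs. destruct (constructive_indefinite_description _ _) as [g0 Hg0]. exact Hg0. }
  destruct (Hec (sys G gs) (solv G gs)) as [s [Heq _]].
  assert (Hb : forall n, N G X a x (gs n) <=
     4 * INR n * N G X a x (s 0%nat) + 2 * N G X a x (s 1%nat) + 2 * N G X a x (s 2%nat)).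
  { intro n. specialize (Heq n _ eq_refl). apply cancel_l in Heq.
    rewrite <- Heq. apply N_comm. exact Ha. }
  pose proof (N_pos G X a x (s 0%nat)). pose proof (N_pos G X a x (s 1%nat)).
  pose proof (N_pos G X a x (s 2%nat)).
  destruct (INR_archimed 1 (4 * N G X a x (s 0%nat) + 2 * N G X a x (s 1%nat) + 2 * N G X a x (s 2%nat) + 1))
    as [n Hn]; [lra|].
  rewrite Rmult_1_r in Hn.
  specialize (Hb n). specialize (Hgs n).
  nra.
Qed.
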